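(* Let $\|\cdot\|$ be any norm on $\mathbb{R}^d$. Suppose $\mathcal{S}$ is a finite collection of subsets of $\mathbb{R}^d$, each with at least $2$ elements, and let $\mathcal{H}(\mathcal{S})=(\mathbb{R}^d,E(\mathcal{S}))$ where $E(\mathcal{S})=\{T\subseteq\mathbb{R}^d \mid T \text{ is congruent in } (\mathbb{R}^d,\|\cdot\|) \text{ to some } S\in\mathcal{S}\}$. Then $\chi(\mathcal{H}(\mathcal{S}))<\infty$.
   Context: Two sets $X,Y\subseteq\mathbb{R}^d$ are congruent in $(\mathbb{R}^d,\|\cdot\|)$ iff one is the image of the other under a composition, in either order, of a surjective linear isometry of $(\mathbb{R}^d,\|\cdot\|)$ and a translation. A hypergraph $(V,E)$ has edges that are subsets of $V$ of size at least $2$; a proper coloring makes no edge monochromatic; $\chi$ is the least number of colors in a proper coloring. *)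

(* Defs.v *)
From HB Require Import structures.
From mathcomp Require Import all_boot all_order all_algebra.
From mathcomp Require Import reals.
Set Implicit Arguments. Unset Strict Implicit. Unset Printing Implicit Defensive.
Import Order.TTheory GRing.Theory Num.Theory.
Local Open Scope ring_scope.

Definition is_norm (R : realType) (d : nat) (N : 'rV[R]_d -> R) : Prop :=
  [/\ forall x, N x = 0 -> x = 0,
      forall (a : R) x, N (a *: x) = `|a| * N x &
      forall x y, N (x + y) <= N x + N y].

Definition lin_isometry (R : realType) (d : nat) (N : 'rV[R]_d -> R)
    (f : 'rV[R]_d -> 'rV[R]_d) : Prop :=
  [/\ forall (a : R) x y, f (a *: x + y) = a *: f x + f y,
      forall y, exists x, f x = y &
      forall x, N (f x) = N x].

Definition img (T U : Type) (f : T -> U) (X : T -> Prop) : U -> Prop :=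
  fun y => exists2 x, X x & f x = y.

Definition congruent (R : realType) (d : nat) (N : 'rV[R]_d -> R)
    (X Y : 'rV[R]_d -> Prop) : Prop :=
  exists f t, lin_isometry N f /\
    ((forall y, Y y <-> img (fun x => f (x + t)) X y) \/
     (forall y, Y y <-> img (fun x => f x + t) X y)).

(* The finite collection S is given as a family SS indexed by 'I_n.
   Edges of H(S): subsets congruent to some member of the collection. *)
Definition edgeS (R : realType) (d : nat) (N : 'rV[R]_d -> R)
    (n : nat) (SS : 'I_n -> ('rV[R]_d -> Prop)) (T : 'rV[R]_d -> Prop) : Prop :=
  exists i, congruent N (SS i) T.

Definition proper_coloring (V : Type) (E : (V -> Prop) -> Prop) (k : nat)
    (c : V -> 'I_k) : Prop :=
  forall T, E T -> ~ (exists col : 'I_k, forall x, T x -> c x = col).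

Definition finite_chromatic (V : Type) (E : (V -> Prop) -> Prop) : Prop :=
  exists k (c : V -> 'I_k), proper_coloring E c.

(* Main.v *)
Require Import Defs.
From HB Require Import structures.
From mathcomp Require Import all_boot all_order all_algebra.
From mathcomp Require Import reals.
From mathcomp Require Import all_classical all_reals all_analysis.
From mathcomp Require Import lra ring.
Import Order.TTheory GRing.Theory Num.Theory.
Import numFieldNormedType.Exports.
Set Implicit Arguments. Unset Strict Implicit.
Local Open Scope classical_set_scope.
Local Open Scope ring_scope.

Section S.
Variables (R : realType) (d : nat) (N : 'rV[R]_d -> R).
Hypothesis hN : is_norm N.

Lemma N0 : N 0 = 0.
Proof. case: hN => _ hZ _. by rewrite -(scale0r 0) hZ normr0 mul0r. Qed.

Lemma coord_le (v : 'rV[R]_d) j : `|v ord0 j| <= `|v|.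
Proof.
change (`|v ord0 j| <= mx_norm v); rewrite mx_normrE.
exact: (le_bigmax 0 (fun ij : 'I_1 * 'I_d => `|v ij.1 ij.2|) (ord0, j)).
Qed.
End S.
Section S2.
Variables (R : realType) (d : nat) (N : 'rV[R]_d -> R).
Hypothesis hN : is_norm N.

Lemma N_sum (I : Type) (r : seq I) (F : I -> 'rV[R]_d) :
  N (\sum_(i <- r) F i) <= \sum_(i <- r) N (F i).
Proof.
elim: r => [|a r IH]; first by rewrite !big_nil (N0 hN).
rewrite !big_cons; case: hN => _ _ hT.
by apply: le_trans (hT _ _) _; rewrite lerD2l.
Qed.

Lemma N_ge0 v : 0 <= N v.
Proof.
case: hN => _ hZ hT.
have := hT v (-v); rewrite subrr (N0 hN) -scaleN1r hZ normrN normr1 mul1r.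
by rewrite -mulr2n pmulrn_lge0.
Qed.

Definition Cst := \sum_(j < d) N (delta_mx 0 j).

Lemma N_upper_coord v : N v <= \sum_(j < d) `|v ord0 j| * N (delta_mx 0 j).
Proof.
rewrite {1}(row_sum_delta v). apply: le_trans; first exact: N_sum.
apply: ler_sum => j _; case: hN => _ hZ _; by rewrite hZ.
Qed.
End S2.
Lemma near_norm (R : realType) (d : nat) (x : 'rV[R]_d) e : 0 < e -> \forall y \near x, `|x - y| < e.
Proof. move=> e0. have h := filter_from_norm_nbhs x.
have : filter_from [set e | 0<e] (ball_ Num.norm x) (fun y => `|x - y| < e) by exists e.
rewrite h. exact. Qed.

Section S3.
Variables (R : realType) (d : nat) (N : 'rV[R]_d -> R).
Hypothesis hN : is_norm N.

Lemma N_upper v : N v <= `|v| * Cst N.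
Proof.
apply: le_trans (N_upper_coord hN v) _.
rewrite /Cst mulr_sumr; apply: ler_sum => j _.
by apply: ler_wpM2r; [exact: N_ge0 | exact: coord_le].
Qed.

Lemma Cst_ge0 : 0 <= Cst N.
Proof. by apply: sumr_ge0 => j _; exact: N_ge0. Qed.

Lemma N_cont : continuous N.
Proof.
move=> x; apply/(@cvgrPdist_lt _ _ _ (nbhs x) (nbhs_filter x)) => e e0.
have C1 : 0 < Cst N + 1 by rewrite ltr_wpDl // Cst_ge0.
have : \forall y \near x, `|x - y| < e / (Cst N + 1).
  by apply: near_norm; exact: divr_gt0.
apply: filterS => y hy.
case: hN => _ hZ hT.
have h1 : `|N x - N y| <= N (x - y).
  rewrite ler_norml; apply/andP; split.
  - have h := hT (y - x) x; rewrite subrK in h.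
    have e1 : N (y - x) = N (x - y) by rewrite -opprB -scaleN1r hZ normrN normr1 mul1r.
    rewrite e1 in h; lra.
  - have h := hT (x - y) y; rewrite subrK in h; lra.
apply: le_lt_trans h1 _.
apply: le_lt_trans (N_upper _) _.
have : `|x - y| * Cst N <= `|x - y| * (Cst N + 1) by apply: ler_wpM2l => //; lra.
move=> h2; apply: le_lt_trans h2 _.
by rewrite -ltr_pdivlMr.
Qed.
End S3.
Lemma N_lower (R : realType) (d : nat) (N : 'rV[R]_d -> R) :
  is_norm N -> exists2 m, 0 < m & forall v, m * `|v| <= N v.
Proof.
move=> hN.
have unit (v : 'rV[R]_d) : v != 0 -> `| `|v|^-1 *: v | = 1.
  move=> v0; rewrite normrZ normfV normr_id mulVf //.
  by rewrite normr_eq0.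
have hv v (m : R) : (forall w, `|w| = 1 -> m <= N w) -> m * `|v| <= N v.
  move=> H; have [->|v0] := eqVneq v 0; first by rewrite normr0 mulr0 N_ge0.
  have := H _ (unit v v0).
  case: (hN) => _ hZ _; rewrite hZ normfV normr_id => h.
  by rewrite ler_pdivlMl ?normr_gt0 // mulrC in h.
pose A := [set v : 'rV[R]_d | `|v| = 1].
have [[c Ac]|A0] := pselect (A !=set0); last first.
  exists 1 => // v; apply: hv => w w1; exfalso; apply: A0; by exists w.
have cA : compact A.
  apply: bounded_closed_compact.
    exists 1; split; first by rewrite num_real.
    move=> M M1 w /= ->; exact: ltW.
  have := proj1 (continuous_closedP (fun v : 'rV[R]_d => `|v|)) (@norm_continuous _ _) [set x | x = 1] (@closed_eq _ 1).
  exact.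
have [c0 c0A minc] := EVT_min_rV (ex_intro _ c Ac) cA (continuous_subspaceT (N_cont hN)).
exists (N c0).
  rewrite lt_def N_ge0 // andbT; apply/eqP => h.
  case: (hN) => h0 _ _; have := h0 _ h => c00.
  rewrite inE /A /= c00 normr0 in c0A; by move: c0A => /eqP; rewrite eq_sym oner_eq0.
move=> v; apply: hv => w w1; apply: minc; by rewrite inE.
Qed.

Lemma mod_far (p q M : int) : 0 < M -> (p %% M)%Z = (q %% M)%Z -> p != q -> M <= `|p - q|.
Proof.
move=> M0 e pq.
have -> : p - q = (divz p M - divz q M) * M.
  by rewrite {1}(intdiv.divz_eq p M) {1}(intdiv.divz_eq q M) e mulrBl; ring.
set k := (_ - _)%Z.
have k0 : k != 0.
  apply: contraNneq pq => k0.
  by rewrite (intdiv.divz_eq p M) (intdiv.divz_eq q M) e; move/eqP: k0; rewrite subr_eq0 => /eqP ->.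
rewrite normrM (gtr0_norm M0) ler_pMl //.
by rewrite -gtz0_ge1 normr_gt0.
Qed.

Lemma floor_far (R : realType) (X Y : R) (M : int) :
  M <= `|Num.floor X - Num.floor Y| -> (M - 1)%:~R < `|X - Y|.
Proof.
move=> h.
have hX := floor_itv X; have hY := floor_itv Y.
move/andP: hX => [hX1 hX2]; move/andP: hY => [hY1 hY2].
rewrite intrD in hX2; rewrite intrD in hY2.
have h' : M%:~R <= `|(Num.floor X)%:~R - (Num.floor Y)%:~R : R|.
  by rewrite -intrB -intr_norm ler_int.
rewrite intrB.
move: h'; rewrite ler_normr => /orP [] h1; rewrite ltr_normr; apply/orP; [left|right]; lra.
Qed.

Lemma mod_small_nat (r M : int) : 0 < M -> 0 <= r -> r < M -> (absz r <= absz M)%N.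
Proof.
move=> M0 r0 rM; rewrite -lez_nat !abszE (ger0_norm r0) (gtr0_norm M0); exact: ltW.
Qed.

Lemma coloring (R : realType) (d : nat) (N : 'rV[R]_d -> R) (a b : R) :
  is_norm N -> 0 < a -> exists k (c : 'rV[R]_d -> 'I_k),
    forall x y, c x = c y -> N (x - y) < a \/ b < N (x - y).
Proof.
move=> hN a0.
have [m m0 hm] := N_lower hN.
have C0 := Cst_ge0 hN.
pose s := a / (Cst N + 1).
have s0 : 0 < s by apply: divr_gt0 => //; lra.
pose K : int := Num.floor (`|b| / (m * s)) + 1.
have K1 : 1 <= K.
  by rewrite /K lerDr floor_ge0 divr_ge0 // ltW // mulr_gt0.
pose M : int := K + 1.
have M0 : 0 < M by rewrite /M; lra.
pose fl (x : 'rV[R]_d) j := Num.floor (x ord0 j / s).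
pose col (x : 'rV[R]_d) : {ffun 'I_d -> 'I_(absz M).+1} :=
  [ffun j => inord (absz (fl x j %% M)%Z)].
exists _, (fun x => enum_rank (col x)).
move=> x y /enum_rank_inj hc.
have hj j : (fl x j %% M)%Z = (fl y j %% M)%Z.
  have := congr1 (fun f : {ffun 'I_d -> 'I_(absz M).+1} => val (f j)) hc; rewrite /= !ffunE /=.
  have M0' : M != 0 by rewrite gt_eqF.
  rewrite !inordK ?ltnS; last 2 first.
  - by apply: mod_small_nat => //; [exact: modz_ge0 | exact: ltz_pmod].
  - by apply: mod_small_nat => //; [exact: modz_ge0 | exact: ltz_pmod].
  move=> /(congr1 Posz); rewrite !abszE !ger0_norm //; exact: modz_ge0.
have dist j : `|(x - y) ord0 j| = s * `|x ord0 j / s - y ord0 j / s|.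
  have sn : s != 0 by rewrite gt_eqF.
  rewrite !mxE -{1}(gtr0_norm s0) -normrM mulrBr [s * (x ord0 j / s)]mulrC [s * (y ord0 j / s)]mulrC !divfK //.
have [allj|] := pselect (forall j, fl x j = fl y j).
  left.
  apply: le_lt_trans (N_upper_coord hN _) _.
  apply: (@le_lt_trans _ _ (s * Cst N)); last first.
    have : s * Cst N < s * (Cst N + 1) by rewrite ltr_pM2l //; lra.
    by rewrite /s divfK //; lra.
  rewrite /Cst mulr_sumr; apply: ler_sum => j _.
  apply: ler_wpM2r; first exact: N_ge0.
  rewrite dist -[leRHS](mulr1 s); apply: ler_wpM2l; first exact: ltW.
  have := floor_itv (x ord0 j / s); have := floor_itv (y ord0 j / s).
  rewrite -/(fl x j) -/(fl y j) (allj j) intrD.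
  move=> /andP[h1 h2] /andP[h3 h4]; rewrite ler_norml; apply/andP; split; lra.
move=> /(proj2 (existsNP _)) [j hne].
right.
have far := @mod_far _ _ _ M0 (hj j) (introN eqP hne).
have := @floor_far _ _ _ _ far; rewrite /M addrK => hK.
have hK2 : `|b| / (m * s) < K%:~R by rewrite /K; exact: floorD1_gt.
have h3 : `|b| < m * `|(x - y) ord0 j|.
  have ms0 : 0 < m * s by exact: mulr_gt0.
  have e1 : `|b| = (m * s) * (`|b| / (m * s)) by rewrite mulrC divfK // gt_eqF.
  rewrite dist e1 [m * (s * _)]mulrA ltr_pM2l //; exact: lt_trans hK2 hK.
apply: (le_lt_trans (ler_norm b)); apply: lt_le_trans h3 _.
apply: le_trans (hm _); apply: ler_wpM2l; [exact: ltW | exact: coord_le].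
Qed.

Lemma bounds (R : realType) (d : nat) (N : 'rV[R]_d -> R)
    (n : nat) (SS : 'I_n -> ('rV[R]_d -> Prop)) :
  is_norm N ->
  (forall i, exists x y, SS i x /\ SS i y /\ x <> y) ->
  exists a b, 0 < a /\ forall i, exists x y, [/\ SS i x, SS i y, a <= N (x - y) & N (x - y) <= b].
Proof.
move=> hN hS.
have H i : exists r, 0 < r /\ exists x y, [/\ SS i x, SS i y & N (x - y) = r].
  have [x [y [hx [hy xy]]]] := hS i.
  exists (N (x - y)); split; last by exists x, y.
  rewrite lt_def N_ge0 // andbT; apply/eqP => h.
  case: hN => h0 _ _; apply: xy; apply/eqP; rewrite -subr_eq0; apply/eqP; exact: h0.
have [r hr] := choice H.
pose S := \sum_i (r i)^-1.
have S0 : 0 <= S by apply: sumr_ge0 => i _; rewrite invr_ge0 ltW //; case: (hr i).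
exists (1 / (1 + S)), (\sum_i r i); split.
  by apply: divr_gt0 => //; lra.
move=> i; have [ri0 [x [y [hx hy hxy]]]] := hr i.
exists x, y; split => //; rewrite hxy.
- rewrite ler_pdivrMr; last lra.
  have hi : (r i)^-1 <= 1 + S.
    rewrite /S (bigD1 i) //=.
    have : 0 <= \sum_(j | j != i) (r j)^-1.
      by apply: sumr_ge0 => j _; rewrite invr_ge0 ltW //; case: (hr j).
    lra.
  apply: le_trans (ler_wpM2l (ltW ri0) hi).
  by rewrite mulfV // gt_eqF.
- rewrite (bigD1 i) //=.
  have : 0 <= \sum_(j | j != i) r j.
    by apply: sumr_ge0 => j _; rewrite ltW //; case: (hr j).
  lra.
Qed.

Lemma lin_sub (R : realType) (d : nat) (N : 'rV[R]_d -> R) f p q :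
  lin_isometry N f -> f p - f q = f (p - q).
Proof.
case=> hl _ _.
have e : p - q = (-1) *: q + p by rewrite scaleN1r addrC.
by rewrite e hl scaleN1r addrC.
Qed.

Unset Implicit Arguments.
Theorem lemma4p2 (R : realType) (d : nat) (N : 'rV[R]_d -> R)
    (n : nat) (SS : 'I_n -> ('rV[R]_d -> Prop)) :
  is_norm N ->
  (forall i, exists x y, SS i x /\ SS i y /\ x <> y) ->
  finite_chromatic (edgeS N SS).
Proof.
move=> hN hS.
have [a [b [a0 hab]]] := bounds hN hS.
have [k [c hc]] := coloring b hN a0.
exists k, c => T [i [f [t [hf hT]]]] [col hcol].
have [x [y [hx hy h1 h2]]] := hab i.
have hiso := hf; case: hiso => _ _ hNf.
have key : forall u w, T u -> T w -> N (u - w) = N (x - y) -> False.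
  move=> u w Tu Tw e.
  have := hc u w; rewrite (hcol _ Tu) (hcol _ Tw) => /(_ erefl); rewrite e.
  case=> h; lra.
case: hT => hT.
- apply: (key (f (x + t)) (f (y + t))).
  + by apply/hT; exists x.
  + by apply/hT; exists y.
  + by rewrite (lin_sub _ _ hf) hNf; congr N; rewrite opprD addrACA subrr addr0.
- apply: (key (f x + t) (f y + t)).
  + by apply/hT; exists x.
  + by apply/hT; exists y.
  + by rewrite opprD addrACA subrr addr0 (lin_sub _ _ hf) hNf.
Qed.
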